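(* Let $\lambda$ be a positive integer that is a sum of two squares of rational integers. Then for every $1\leq k\leq 3$, every $k$-icube in $\mathbb{Z}[i]^3$ of norm $\lambda$ can be extended to a $3$-icube (of norm $\lambda$).
   Context: For $1\leq k\leq n$, a matrix $(v_1|\dotsc|v_k)\in\mathbb{Z}[i]^{n\times k}$ is a $k$-icube in $\mathbb{Z}[i]^n$ of norm $\lambda>0$ if $v_i^*v_j=\lambda$ for $i=j$ and $v_i^*v_j=0$ for $i\neq j$, where $v^*=\overline{v}^T$. An $\ell$-icube $A$ can be extended to a $k$-icube ($\ell<k$) if some $\ell$ columns of some $k$-icube form $A$. *)

(* Defs.v *)
From HB Require Import structures.
From mathcomp Require Import all_boot all_order all_algebra all_field.
Set Implicit Arguments. Unset Strict Implicit. Unset Printing Implicit Defensive.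
Import Order.TTheory GRing.Theory Num.Theory.
Local Open Scope ring_scope.

Definition gaussInt (z : algC) : bool :=
  ('Re z \is a Num.int) && ('Im z \is a Num.int).

Definition gaussMx m n (A : 'M[algC]_(m, n)) : Prop :=
  forall i j, gaussInt (A i j).

Definition adjmx m n (A : 'M[algC]_(m, n)) : 'M[algC]_(n, m) :=
  (map_mx Num.conj A)^T.

(* (v_1|...|v_k) in Z[i]^{n x k} is a k-icube of norm lam:
   v_i^* v_j = lam if i = j and 0 otherwise, i.e. A^* A = lam I_k. *)
Definition icube n k (lam : algC) (A : 'M[algC]_(n, k)) : Prop :=
  gaussMx A /\ adjmx A *m A = lam%:M.

Definition icube_extends n l k (lam : algC) (A : 'M[algC]_(n, l)) : Prop :=
  exists (B : 'M[algC]_(n, k)) (f : 'I_l -> 'I_k),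
    icube lam B /\ injective f /\ colsub f B = A.

(* Main.v *)
Require Import Defs.
From HB Require Import structures.
From mathcomp Require Import all_boot all_order all_algebra all_field.
From mathcomp Require Import ring lra zify.
Set Implicit Arguments. Unset Strict Implicit. Unset Printing Implicit Defensive.
Import Order.TTheory GRing.Theory Num.Theory.
Local Open Scope ring_scope.


Lemma giP z : reflect (exists a b : int, z = a%:~R + 'i * b%:~R) (gaussInt z).
Proof.
apply: (iffP andP) => [[/intrP[a ha] /intrP[b hb]]|[a [b ->]]].
  by exists a, b; rewrite [LHS]Crect ha hb.
have ra : (a%:~R : algC) \is Num.real by apply: Rreal_int; apply: intr_int.
have rb : (b%:~R : algC) \is Num.real by apply: Rreal_int; apply: intr_int.
by rewrite Re_rect // Im_rect // !intr_int.
Qed.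

Lemma mulC_rect (a b c d : algC) :
  (a + 'i*b)*(c+'i*d) = (a*c - b*d) + 'i*(a*d+b*c).
Proof.
transitivity ((a*c - b*d) + 'i*(a*d+b*c) + ('i^+2 + 1)*(b*d)); first ring.
by rewrite sqrCi addNr mul0r addr0.
Qed.

Definition gP : {pred algC} := fun z => gaussInt z.

Lemma gP_subring : subring_closed gP.
Proof.
split.
- by apply/giP; exists 1, 0; rewrite mulr0 addr0.
- move=> x y /giP[a [b ->]] /giP[c [d ->]]; apply/giP; exists (a - c), (b - d).
  by rewrite !rmorphB /=; ring.
- move=> x y /giP[a [b ->]] /giP[c [d ->]]; apply/giP; exists (a*c - b*d), (a*d + b*c).
  rewrite !rmorphB !rmorphD !rmorphM /=.
  by rewrite mulC_rect.
Qed.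

HB.instance Definition _ := GRing.isSubringClosed.Build algC gP gP_subring.

Lemma gPE z : (z \in gP) = gaussInt z. Proof. by []. Qed.

Lemma gP_int (a : int) : (a%:~R : algC) \in gP.
Proof. by apply/giP; exists a, 0; rewrite mulr0 addr0. Qed.
Lemma gP_nat (n : nat) : (n%:R : algC) \in gP.
Proof. exact: rpred_nat. Qed.
Lemma gP_i : 'i \in gP.
Proof. by apply/giP; exists 0, 1; rewrite mulr1 add0r. Qed.
Lemma gP_conj z : z \in gP -> z^* \in gP.
Proof.
move=> /giP[a [b ->]]; apply/giP; exists a, (- b).
rewrite rmorphD rmorphM /= conjCi !rmorph_int.
have -> : ((- b)%:~R : algC) = - b%:~R by rewrite mulrNz.
ring.
Qed.

Lemma gP_sum (I : finType) (F : I -> algC) : (forall i, F i \in gP) -> \sum_i F i \in gP.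
Proof. by move=> h; apply: rpred_sum => i _. Qed.

Definition nrm (z : algC) := z * z^*.

Lemma nrm_rect (a b : int) : nrm (a%:~R + 'i * b%:~R) = (a * a + b * b)%:~R.
Proof.
rewrite /nrm rmorphD rmorphM /= conjCi !rmorph_int.
transitivity ((a%:~R:algC)^+2 + (b%:~R)^+2 - ('i^+2 + 1) * (b%:~R)^+2); first ring.
by rewrite sqrCi addNr mul0r subr0 rmorphD /= !rmorphM.
Qed.

Lemma nrm_nat z : z \in gP -> exists n : nat, nrm z = n%:R.
Proof.
move=> /giP[a [b ->]]; rewrite nrm_rect.
exists `|(a * a + b * b)%R|%N.
rewrite natr_absz ger0_norm //. by rewrite addr_ge0 // -expr2 sqr_ge0.
Qed.

Lemma nrmE z : nrm z = `|z| ^+ 2. Proof. by rewrite normCK. Qed.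
Lemma nrm_ge0 z : 0 <= nrm z. Proof. by rewrite nrmE exprn_ge0. Qed.
Lemma nrmM x y : nrm (x * y) = nrm x * nrm y.
Proof. by rewrite /nrm rmorphM /=; ring. Qed.
Lemma nrmC z : nrm z^* = nrm z.
Proof. by rewrite /nrm conjCK mulrC. Qed.
Lemma nrm_eq0 z : (nrm z == 0) = (z == 0).
Proof. by rewrite nrmE expf_eq0 /= normr_eq0. Qed.

Definition nN z := Num.truncn (nrm z).

Lemma nNE z : z \in gP -> (nN z)%:R = nrm z.
Proof. by move=> /nrm_nat[n hn]; rewrite /nN hn natrK. Qed.

Lemma nNM x y : x \in gP -> y \in gP -> nN (x * y) = (nN x * nN y)%N.
Proof.
move=> hx hy; apply/eqP; rewrite -(eqr_nat algC) natrM !nNE ?rpredM //.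
by rewrite nrmM.
Qed.

Lemma nN_eq0 z : z \in gP -> (nN z == 0)%N = (z == 0).
Proof. by move=> hz; rewrite -(eqr_nat algC) nNE // nrm_eq0. Qed.

Lemma nNC z : z \in gP -> nN z^* = nN z.
Proof. by move=> hz; apply/eqP; rewrite -(eqr_nat algC) !nNE ?gP_conj // nrmC. Qed.

Lemma natz_alg (n : nat) : (n%:R : algC) = (n%:Z)%:~R.
Proof. by rewrite pmulrn. Qed.

Lemma gdiv a b : a \in gP -> b \in gP -> b != 0 ->
  exists q r, [/\ q \in gP, r \in gP, a = b * q + r & (2 * nN r <= nN b)%N].
Proof.
move=> ha hb b0.
have hp : a * b^* \in gP by rewrite rpredM ?gP_conj.
case/giP: hp => p1 [p2 hp].
set n := nN b.
have hn : b * b^* = n%:R by rewrite nNE.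
have n0 : (0 < n)%N by rewrite lt0n nN_eq0.
pose N : int := n%:Z.
have N0 : 0 < N by rewrite ltz_nat.
pose q1 := ((2 * p1 + N) %/ (2 * N))%Z.
pose q2 := ((2 * p2 + N) %/ (2 * N))%Z.
have h1 : q1 * (2 * N) <= 2 * p1 + N by apply: lez_floor; lia.
have h2 : 2 * p1 + N < (q1 + 1) * (2 * N) by apply: ltz_ceil; lia.
have h3 : q2 * (2 * N) <= 2 * p2 + N by apply: lez_floor; lia.
have h4 : 2 * p2 + N < (q2 + 1) * (2 * N) by apply: ltz_ceil; lia.
pose q : algC := q1%:~R + 'i * q2%:~R.
have hq : q \in gP by apply/giP; exists q1, q2.
exists q, (a - b * q); split => //; first by rewrite rpredB ?rpredM.
  by rewrite addrC subrK.
set r := a - b * q.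
have hr : r \in gP by rewrite rpredB ?rpredM.
have e : r * b^* = (p1 - N * q1)%:~R + 'i * (p2 - N * q2)%:~R.
  rewrite /r mulrBl hp mulrAC hn natz_alg.
  rewrite !rmorphB !rmorphM /= /q. ring.
have e2 : ((nN r * n)%:Z)%:~R = (((p1 - N * q1) * (p1 - N * q1) + (p2 - N * q2) * (p2 - N * q2)))%:~R :> algC.
  by rewrite -nrm_rect -e nrmM nrmC -!nNE ?gP_conj // -natrM natz_alg.
move/eqP: e2; rewrite eqr_int => /eqP e2.
have : (2 * nN r * n <= n * n)%N.
  suff : ((2 * nN r * n)%:Z <= (n * n)%:Z)%R by rewrite lez_nat.
  rewrite -mulnA PoszM e2 PoszM -/N.
  have e1 : 0 <= (N - 2*(p1 - N*q1)) * (N + 2*(p1 - N*q1)) by apply: mulr_ge0; lia.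
  have e3 : 0 <= (N - 2*(p2 - N*q2)) * (N + 2*(p2 - N*q2)) by apply: mulr_ge0; lia.
  set u := p1 - N * q1 in e1 *; set w := p2 - N * q2 in e3 *.
  have : 4 * (u * u) <= N * N by move: e1; rewrite mulrBl !mulrDr; lia.
  have : 4 * (w * w) <= N * N by move: e3; rewrite mulrBl !mulrDr; lia.
  lia.
by rewrite leq_pmul2r.
Qed.

Definition gdvd d x := exists2 c, c \in gP & x = d * c.

Lemma gdvd_refl d : gdvd d d. Proof. by exists 1; rewrite ?rpred1 ?mulr1. Qed.
Lemma gdvd0 d : gdvd d 0. Proof. by exists 0; rewrite ?rpred0 ?mulr0. Qed.
Lemma gdvd_trans a b c : gdvd a b -> gdvd b c -> gdvd a c.
Proof. by move=> [x hx ->] [y hy ->]; exists (x * y); rewrite ?rpredM ?mulrA. Qed.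
Lemma gdvdM a b c : c \in gP -> gdvd a b -> gdvd a (b * c).
Proof. by move=> hc [x hx ->]; exists (x * c); rewrite ?rpredM ?mulrA. Qed.
Lemma gdvdD a b c : gdvd a b -> gdvd a c -> gdvd a (b + c).
Proof. by move=> [x hx ->] [y hy ->]; exists (x + y); rewrite ?rpredD ?mulrDr. Qed.

Lemma bezout2 a b : a \in gP -> b \in gP -> exists g x y,
  [/\ g \in gP, x \in gP, y \in gP, g = a * x + b * y & gdvd g a /\ gdvd g b].
Proof.
suff H : forall n a b, (nN b < n)%N -> a \in gP -> b \in gP -> exists g x y,
  [/\ g \in gP, x \in gP, y \in gP, g = a * x + b * y & gdvd g a /\ gdvd g b].
  by apply: (H (nN b).+1).
clear a b; elim=> [//|n IH] a b hbn ha hb.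
case: (b =P 0) => [->|/eqP b0].
  exists a, 1, 0; split; rewrite ?rpred1 ?rpred0 ?mulr1 ?mul0r ?addr0 //.
  by split; [exact: gdvd_refl | exact: gdvd0].
have [q [r [hq hr e le]]] := gdiv ha hb b0.
have rlt : (nN r < n)%N.
  have : (0 < nN b)%N by rewrite lt0n nN_eq0.
  move: hbn le; lia.
have [g [x [y [hg hx hy eg [[c1 hc1 e1] [c2 hc2 e2]]]]]] := IH b r rlt hb hr.
exists g, y, (x - q * y); split => //; first by rewrite rpredB ?rpredM.
  have er : r = a - b * q by rewrite e; ring.
  by rewrite eg er; ring.
split; last by exists c1.
by exists (c1 * q + c2); rewrite ?rpredD ?rpredM // e e1 e2; ring.
Qed.

Lemma bezoutF n (F : 'I_n -> algC) : (forall i, F i \in gP) ->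
  exists g (c : 'I_n -> algC), [/\ g \in gP, (forall i, c i \in gP),
     g = \sum_i F i * c i & forall i, gdvd g (F i)].
Proof.
elim: n F => [|n IH] F hF.
  exists 0, (fun _ => 0); split; rewrite ?rpred0 ?big_ord0 //; by case.
have [g' [c' [hg' hc' eg' dg']]] := IH (fun i => F (widen_ord (leqnSn n) i)) (fun i => hF _).
have [g [x [y [hg hx hy eg [d1 d2]]]]] := bezout2 hg' (hF ord_max).
exists g, (fun i : 'I_n.+1 => if @insub nat (fun k => k < n)%N 'I_n (val i) is Some j then c' j * x else y).
split => //.
- by move=> i; case: insubP => [j _ _|_]; rewrite ?rpredM.
- rewrite big_ord_recr /= eg eg' mulr_suml; congr (_ + _).
    apply: eq_bigr => i _; case: insubP => [j _ ej|]; last by rewrite /= ltn_ord.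
    by rewrite mulrA; congr (_ * _ * _); congr c'; apply: val_inj.
  by case: insubP => [j hj _|//]; move: hj; rewrite /= ltnn.
- move=> i; case: (ltnP i n) => hi.
    have -> : i = widen_ord (leqnSn n) (Ordinal hi) by apply: val_inj.
    exact: gdvd_trans d1 (dg' _).
  have -> : i = ord_max by apply: val_inj => /=; move: (ltn_ord i) hi; lia.
  exact: d2.
Qed.

Lemma gauss_lemma a b c x y : a \in gP -> b \in gP -> c \in gP -> x \in gP -> y \in gP ->
  1 = a * x + b * y -> gdvd a (b * c) -> gdvd a c.
Proof.
move=> ha hb hc hx hy e [k hk ek].
exists (c * x + k * y); first by rewrite rpredD ?rpredM.
transitivity ((a * x + b * y) * c); first by rewrite -e mul1r.
transitivity (a * (c * x) + (b * c) * y); first ring.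
by rewrite ek; ring.
Qed.

Lemma gP_nrm z : z \in gP -> nrm z \in gP.
Proof. by move=> hz; rewrite /nrm rpredM ?gP_conj. Qed.

Lemma normdiv mu d : mu \in gP -> d \in gP -> mu != 0 ->
  gdvd (nrm mu) (nrm d) -> exists2 de, de \in gP & gdvd de d /\ nrm de = nrm mu.
Proof.
move=> hmu hd mu0 [k hk ek].
have [g [x [y [hg hx hy eg [[d1 hd1 e1] [m1 hm1 e2]]]]]] := bezout2 hd hmu.
have g0 : g != 0 by apply: contraNneq mu0 => g0; rewrite e2 g0 mul0r.
have e3 : 1 = d1 * x + m1 * y.
  apply: (mulfI g0); rewrite mulr1 mulrDr !mulrA -e1 -e2 //.
have ng0 : nrm g != 0 by rewrite nrm_eq0.
have e4 : nrm d1 = nrm m1 * k.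
  by move: ek; rewrite e1 e2 !nrmM -mulrA => /(mulfI ng0).
have dv : gdvd m1 (d1 * d1^*).
  by exists (m1^* * k); rewrite ?rpredM ?gP_conj // mulrA -e4.
have [kap hkap ekap] := gauss_lemma hm1 hd1 (gP_conj hd1) hy hx ltac:(by rewrite e3 addrC) dv.
exists (g * m1^*); first by rewrite rpredM ?gP_conj.
split.
  exists kap^*; first by rewrite gP_conj.
  by rewrite e1 -mulrA; congr (_ * _); rewrite -[d1]conjCK ekap rmorphM.
by rewrite e2 !nrmM nrmC.
Qed.



Definition vI n (x : 'I_n.+1 -> algC) (k : nat) := x (inord k).
Lemma vIE n (x : 'I_n.+1 -> algC) (i : 'I_n.+1) : x i = vI x i.
Proof. by rewrite /vI inord_val. Qed.

Lemma sum3 (F : 'I_3 -> algC) : \sum_i F i = vI F 0 + vI F 1 + vI F 2.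
Proof. rewrite !big_ord_recr big_ord0 !(vIE F) /=; ring. Qed.
Lemma sum4 (F : 'I_4 -> algC) : \sum_i F i = vI F 0 + vI F 1 + vI F 2 + vI F 3.
Proof. rewrite !big_ord_recr big_ord0 !(vIE F) /=; ring. Qed.

Definition gv n (x : 'I_n -> algC) := forall i, x i \in gP.
Definition scv n (c : algC) (x : 'I_n -> algC) := fun i => c * x i.
Definition cjv n (x : 'I_n -> algC) := fun i => (x i)^*.

Lemma vI_scv n c (x : 'I_n.+1 -> algC) k : vI (scv c x) k = c * vI x k. Proof. by []. Qed.
Lemma vI_cjv n (x : 'I_n.+1 -> algC) k : vI (cjv x) k = (vI x k)^*. Proof. by []. Qed.

Definition hp (x z : 'I_3 -> algC) := \sum_i (x i)^* * z i.
Lemma hpE x z : hp x z = (vI x 0)^* * vI z 0 + (vI x 1)^* * vI z 1 + (vI x 2)^* * vI z 2.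
Proof. by rewrite /hp sum3. Qed.

Definition cross (x z : 'I_3 -> algC) : 'I_3 -> algC := fun i =>
  match val i with
  | 0 => vI x 1 * vI z 2 - vI x 2 * vI z 1
  | 1 => vI x 2 * vI z 0 - vI x 0 * vI z 2
  | _ => vI x 0 * vI z 1 - vI x 1 * vI z 0 end.
Lemma cross0 x z : vI (cross x z) 0 = vI x 1 * vI z 2 - vI x 2 * vI z 1.
Proof. by rewrite /vI /cross /= inordK. Qed.
Lemma cross1 x z : vI (cross x z) 1 = vI x 2 * vI z 0 - vI x 0 * vI z 2.
Proof. by rewrite /vI /cross /= inordK. Qed.
Lemma cross2 x z : vI (cross x z) 2 = vI x 0 * vI z 1 - vI x 1 * vI z 0.
Proof. by rewrite /vI /cross /= inordK. Qed.

Lemma hpC x z : hp z x = (hp x z)^*.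
Proof. by rewrite !hpE !rmorphD !rmorphM /= !conjCK; ring. Qed.

Lemma hp_sclr x c z : hp x (scv c z) = c * hp x z.
Proof. by rewrite !hpE !vI_scv; ring. Qed.
Lemma hp_scll x c z : hp (scv c x) z = c^* * hp x z.
Proof. by rewrite !hpE !vI_scv !rmorphM; ring. Qed.

Lemma gv_hp x z : gv x -> gv z -> hp x z \in gP.
Proof. by move=> hx hz; apply: rpred_sum => i _; rewrite rpredM ?gP_conj. Qed.

Lemma gv_cjv n (x : 'I_n -> algC) : gv x -> gv (cjv x).
Proof. by move=> h i; apply: gP_conj. Qed.

Lemma gv_vI n (x : 'I_n.+1 -> algC) k : gv x -> vI x k \in gP.
Proof. by move=> h; apply: h. Qed.

Lemma gv_cross x z : gv x -> gv z -> gv (cross x z).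
Proof.
move=> hx hz i; rewrite /cross; case: (val i) => [|[|k]];
  by rewrite rpredB ?rpredM ?gv_vI.
Qed.

Lemma hp_cross1 a b : hp a (cjv (cross a b)) = 0.
Proof. by rewrite hpE !vI_cjv cross0 cross1 cross2 !rmorphB !rmorphM; ring. Qed.
Lemma hp_cross2 a b : hp b (cjv (cross a b)) = 0.
Proof. by rewrite hpE !vI_cjv cross0 cross1 cross2 !rmorphB !rmorphM; ring. Qed.
Lemma lagr3 a b : hp (cjv (cross a b)) (cjv (cross a b)) =
  hp a a * hp b b - hp a b * hp b a.
Proof. by rewrite !hpE !vI_cjv cross0 cross1 cross2 !conjCK !rmorphB !rmorphM; ring. Qed.

Lemma decomp3 a b x (i : 'I_3) :
  (hp a a * hp b b - hp a b * hp b a) * x i =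
  (hp b b * hp a x - hp a b * hp b x) * a i + (hp a a * hp b x - hp b a * hp a x) * b i
  + cjv (cross a b) i * hp (cjv (cross a b)) x.
Proof.
rewrite !hpE !vI_cjv cross0 cross1 cross2 ?conjCK ?rmorphB ?rmorphM /cjv.
rewrite !(vIE x i) !(vIE a i) !(vIE b i).
case: i => [[|[|[|//]]] hi] /=; rewrite ?cross0 ?cross1 ?cross2 ?rmorphB ?rmorphM; ring.
Qed.

Lemma hp_eq0 x : hp x x = 0 -> forall i, x i = 0.
Proof.
rewrite hpE => h.
have p k : 0 <= (vI x k)^* * vI x k by rewrite mulrC -normCK exprn_ge0.
move/eqP: h; rewrite paddr_eq0 ?addr_ge0 // paddr_eq0 // => /andP[/andP[h0 h1] h2].
have z k : (vI x k)^* * vI x k == 0 -> vI x k = 0.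
  by rewrite mulf_eq0 conjC_eq0 orbb => /eqP.
move=> i; rewrite (vIE x i); case: i => [[|[|[|//]]] hi] /=; exact: z.
Qed.

Lemma ext2 lam mu v1 v2 : mu \in gP -> nrm mu = lam -> lam != 0 -> gv v1 -> gv v2 ->
  hp v1 v1 = lam -> hp v2 v2 = lam -> hp v1 v2 = 0 ->
  exists v3, [/\ gv v3, hp v3 v3 = lam, hp v1 v3 = 0 & hp v2 v3 = 0].
Proof.
move=> hmu emu l0 g1 g2 e11 e22 e12.
have e21 : hp v2 v1 = 0 by rewrite hpC e12 conjC0.
set w := cjv (cross v1 v2).
have gw : gv w by apply/gv_cjv/gv_cross.
have eww : hp w w = lam * lam by rewrite lagr3 e11 e22 e12 e21 mulr0 subr0.
have [g [c [hg hc eg dg]]] := bezoutF gw.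
have g0 : g != 0.
  apply/eqP => g0; move/eqP: l0; apply; apply/eqP.
  have : hp w w = 0.
    by rewrite /hp big1 // => i _; case: (dg i) => k _ ->; rewrite g0 mul0r mulr0.
  by rewrite eww => /eqP; rewrite mulf_eq0 orbb.
pose u := fun i => w i / g.
have gu : gv u by move=> i; rewrite /u; case: (dg i) => k hk ->; rewrite mulrC mulKf.
have ewu : forall i, w i = g * u i by move=> i; rewrite /u mulrC divfK.
clearbody u.
have e1 : 1 = \sum_i u i * c i.
  apply: (mulfI g0); rewrite mulr1 {1}eg mulr_sumr; apply: eq_bigr => i _.
  by rewrite ewu -mulrA.
pose x := cjv c.
have gx : gv x by apply: gv_cjv.
have hux : hp u x = 1.
  rewrite /hp -(conjC1) e1 rmorph_sum /=; apply: eq_bigr => i _.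
  by rewrite rmorphM.
have hwx : hp w x = g^*.
  have -> : hp w x = hp (scv g u) x by rewrite !hpE /vI /scv !ewu.
  by rewrite hp_scll hux mulr1.
pose ka := nrm g / lam.
have gku : forall i, ka * u i \in gP.
  move=> i; have := decomp3 v1 v2 x i.
  rewrite -/w e11 e22 e12 e21 !mul0r !subr0 hwx ewu => e.
  have -> : ka * u i = lam * x i - hp v1 x * v1 i - hp v2 x * v2 i.
    apply: (mulfI l0); rewrite /ka mulrA mulrCA divff // mulr1.
    rewrite !mulrBr mulrA e /nrm; ring.
  by rewrite !rpredB ?rpredM ?gv_hp ?g1 ?g2 ?gx // -emu gP_nrm.
have gka : ka \in gP.
  rewrite -[ka]mulr1 e1 mulr_sumr; apply: rpred_sum => i _.
  by rewrite mulrA rpredM.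
have dv : gdvd (nrm mu) (nrm g) by exists ka => //; rewrite emu /ka mulrC divfK.
have mu0 : mu != 0 by apply: contraNneq l0 => m0; rewrite -emu m0 /nrm mul0r.
have [de hde [[ep hep eg'] ede]] := normdiv hmu hg mu0 dv.
have de0 : de != 0 by apply: contraNneq l0 => d0; rewrite -emu -ede d0 /nrm mul0r.
exists (scv de^-1 w); split.
- move=> i; rewrite /scv ewu eg' -!mulrA mulKf //.
  by rewrite rpredM.
- have h : (de^-1)^* * de^-1 = lam^-1 by rewrite -emu -ede /nrm fmorphV invfM mulrC.
  by rewrite hp_scll hp_sclr eww (mulrA (de^-1^*)) h mulrA mulVf ?mul1r.
- by rewrite hp_sclr hp_cross1 mulr0.
- by rewrite hp_sclr hp_cross2 mulr0.
Qed.



Definition mI n (M : 'M[algC]_n.+1) (a b : nat) := M (inord a) (inord b).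

Lemma mIE n (M : 'M[algC]_n.+1) i j : M i j = mI M i j.
Proof. by rewrite /mI !inord_val. Qed.

Lemma det3E (M : 'M[algC]_3) : \det M =
  mI M 0 0 * (mI M 1 1 * mI M 2 2 - mI M 1 2 * mI M 2 1)
  - mI M 0 1 * (mI M 1 0 * mI M 2 2 - mI M 1 2 * mI M 2 0)
  + mI M 0 2 * (mI M 1 0 * mI M 2 1 - mI M 1 1 * mI M 2 0).
Proof.
rewrite (expand_det_row _ 0) !big_ord_recr big_ord0 /= add0r /cofactor.
rewrite !(expand_det_row _ 0) !big_ord_recr big_ord0 /= !add0r /cofactor !det_mx11 !mxE.
rewrite !(mIE M) /= !big_ord0 /bump /=.
ring.
Qed.

Lemma det4E (M : 'M[algC]_4) : \det M =
  0 + mI M 0 0 * (mI M 1 1 * (mI M 2 2 * mI M 3 3 - mI M 2 3 * mI M 3 2) - mI M 1 2 * (mI M 2 1 * mI M 3 3 - mI M 2 3 * mI M 3 1) + mI M 1 3 * (mI M 2 1 * mI M 3 2 - mI M 2 2 * mI M 3 1))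
  - mI M 0 1 * (mI M 1 0 * (mI M 2 2 * mI M 3 3 - mI M 2 3 * mI M 3 2) - mI M 1 2 * (mI M 2 0 * mI M 3 3 - mI M 2 3 * mI M 3 0) + mI M 1 3 * (mI M 2 0 * mI M 3 2 - mI M 2 2 * mI M 3 0))
  + mI M 0 2 * (mI M 1 0 * (mI M 2 1 * mI M 3 3 - mI M 2 3 * mI M 3 1) - mI M 1 1 * (mI M 2 0 * mI M 3 3 - mI M 2 3 * mI M 3 0) + mI M 1 3 * (mI M 2 0 * mI M 3 1 - mI M 2 1 * mI M 3 0))
  - mI M 0 3 * (mI M 1 0 * (mI M 2 1 * mI M 3 2 - mI M 2 2 * mI M 3 1) - mI M 1 1 * (mI M 2 0 * mI M 3 2 - mI M 2 2 * mI M 3 0) + mI M 1 2 * (mI M 2 0 * mI M 3 1 - mI M 2 1 * mI M 3 0)).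
Proof.
rewrite (expand_det_row _ 0) !big_ord_recr big_ord0 /= add0r /cofactor.
rewrite !(expand_det_row _ 0) !big_ord_recr big_ord0 /= !add0r /cofactor.
rewrite !(expand_det_row _ 0) !big_ord_recr big_ord0 /= !add0r /cofactor !det_mx11 !mxE.
rewrite !(mIE M) /= !big_ord0 /bump /=.
ring.
Qed.



Definition J4 (i : 'I_4) : algC := if nat_of_ord i == 3%N then -1 else 1.
Definition hJ (x z : 'I_4 -> algC) := \sum_i J4 i * ((x i)^* * z i).

Lemma hJE x z : hJ x z = (vI x 0)^* * vI z 0 + (vI x 1)^* * vI z 1 + (vI x 2)^* * vI z 2
   - (vI x 3)^* * vI z 3.
Proof. rewrite /hJ sum4 /vI /J4 /= !inordK //=; ring. Qed.

Lemma hJC x z : hJ z x = (hJ x z)^*.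
Proof. by rewrite !hJE !rmorphB !rmorphD !rmorphM /= !conjCK; ring. Qed.

Definition vsub n (u : 'I_n -> algC) c (w : 'I_n -> algC) := fun i => u i - c * w i.
Lemma vI_vsub n (u : 'I_n.+1 -> algC) c w k : vI (vsub u c w) k = vI u k - c * vI w k.
Proof. by []. Qed.

Lemma hJ_vsubr x u c w : hJ x (vsub u c w) = hJ x u - c * hJ x w.
Proof. by rewrite !hJE !vI_vsub; ring. Qed.
Lemma hJ_vsubl x u c w : hJ (vsub u c w) x = hJ u x - c^* * hJ w x.
Proof. by rewrite !hJE !vI_vsub !rmorphB !rmorphM; ring. Qed.
Lemma hJ_sclr x c z : hJ x (scv c z) = c * hJ x z.
Proof. by rewrite !hJE !vI_scv; ring. Qed.
Lemma hJ_scll x c z : hJ (scv c x) z = c^* * hJ x z.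
Proof. by rewrite !hJE !vI_scv !rmorphM; ring. Qed.

Lemma gv_hJ x z : gv x -> gv z -> hJ x z \in gP.
Proof.
move=> hx hz; rewrite hJE.
by rewrite rpredB ?rpredD ?rpredM ?gP_conj ?gv_vI.
Qed.
Lemma gv_vsub n (u : 'I_n -> algC) c w : gv u -> c \in gP -> gv w -> gv (vsub u c w).
Proof. by move=> hu hc hw i; rewrite /vsub rpredB ?rpredM. Qed.
Lemma gv_scv n (u : 'I_n -> algC) c : c \in gP -> gv u -> gv (scv c u).
Proof. by move=> hc hu i; rewrite /scv rpredM. Qed.

Lemma hJ_real x : (hJ x x)^* = hJ x x.
Proof. by rewrite -hJC. Qed.

Definition sel4 (a b c d : 'I_4 -> algC) (k : nat) :=
  match k with 0 => a | 1 => b | 2 => c | _ => d end.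

Definition mat4 (a b c d : 'I_4 -> algC) : 'M[algC]_4 :=
  \matrix_(i, j) sel4 a b c d (nat_of_ord j) i.

Lemma gP_det n (A : 'M[algC]_n) : (forall i j, A i j \in gP) -> \det A \in gP.
Proof.
move=> h; rewrite /determinant; apply: rpred_sum => s _.
by rewrite rpredM ?rpredX ?rpredN ?rpred1 //; apply: rpred_prod => i _.
Qed.

Definition Gram4 (X : 'M[algC]_4) :=
  (map_mx Num.conj_op X)^T *m diag_mx (\row_i J4 i) *m X.

Lemma Gram4E a b c d p q : (p < 4)%N -> (q < 4)%N ->
  mI (Gram4 (mat4 a b c d)) p q = hJ (sel4 a b c d p) (sel4 a b c d q).
Proof.
move=> hp hq; rewrite /mI /Gram4 mul_mx_diag /hJ !mxE; apply: eq_bigr => k _.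
rewrite !mxE inordK // inordK //; ring.
Qed.

Lemma prodJ4 : \prod_i J4 i = -1.
Proof. rewrite !big_ord_recr big_ord0 /J4 /=; ring. Qed.

Lemma detGram4 X : \det (Gram4 X) = - nrm (\det X).
Proof.
rewrite /Gram4 !det_mulmx det_tr det_map_mx det_diag.
have -> : \prod_i (\row_i0 J4 i0) 0 i = -1.
  by rewrite -prodJ4; apply: eq_bigr => i _; rewrite mxE.
by rewrite /nrm; ring.
Qed.

Lemma parseval n y x w e m al be ga :
  hJ n n = 0 -> hJ n y = 1 -> hJ n x = 0 -> hJ n w = 0 ->
  hJ y n = 1 -> hJ y y = e -> hJ y x = 0 -> hJ y w = 0 ->
  hJ x n = 0 -> hJ x y = 0 -> hJ x x = m -> hJ x w = al ->
  hJ w n = 0 -> hJ w y = 0 -> hJ w x = be -> hJ w w = ga ->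
  nrm (\det (mat4 n y x w)) = m * ga - al * be.
Proof.
move=> h00 h01 h02 h03 h10 h11 h12 h13 h20 h21 h22 h23 h30 h31 h32 h33.
apply: oppr_inj; rewrite -detGram4 det4E !Gram4E //= .
rewrite h00 h01 h02 h03 h10 h11 h12 h13 h20 h21 h22 h23 h30 h31 h32 h33; ring.
Qed.

Lemma det_mat4_rep0 a b c : \det (mat4 a b c a) = 0.
Proof.
rewrite -det_tr; apply: (@determinant_alternate _ _ _ 0 ord_max) => // j.
by rewrite !mxE.
Qed.
Lemma det_mat4_rep1 a b c : \det (mat4 a b c b) = 0.
Proof.
rewrite -det_tr; apply: (@determinant_alternate _ _ _ (inord 1) ord_max).
  by apply/eqP => /(congr1 val); rewrite /= inordK.
by move=> j; rewrite !mxE inordK.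
Qed.
Lemma det_mat4_rep2 a b c : \det (mat4 a b c c) = 0.
Proof.
rewrite -det_tr; apply: (@determinant_alternate _ _ _ (inord 2) ord_max).
  by apply/eqP => /(congr1 val); rewrite /= inordK.
by move=> j; rewrite !mxE inordK.
Qed.

Definition rvec (a b c : 'I_4 -> algC) : 'I_4 -> algC :=
  fun i => J4 i * (cofactor (mat4 a b c (fun _ => 0)) i ord_max)^*.

Lemma col_indep a b c d d' :
  col' ord_max (mat4 a b c d) = col' ord_max (mat4 a b c d').
Proof.
apply/matrixP => k l; rewrite !mxE.
by rewrite lift_max; case: l => [[|[|[|//]]] hl].
Qed.

Lemma J4sq i : J4 i * J4 i = 1.
Proof. by rewrite /J4; case: ifP => _; rewrite ?mulr1 ?mulrNN ?mulr1. Qed.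
Lemma J4conj i : (J4 i)^* = J4 i.
Proof. by rewrite /J4; case: ifP => _; rewrite ?rmorphN rmorph1. Qed.

Lemma hJ_rvec a b c w : hJ (rvec a b c) w = \det (mat4 a b c w).
Proof.
rewrite (expand_det_col _ ord_max) /hJ; apply: eq_bigr => i _.
rewrite /rvec rmorphM /= conjCK J4conj !mulrA J4sq mul1r.
rewrite (col_indep a b c (fun _ => 0) w) [mat4 _ _ _ _ _ _]mxE /=; ring.
Qed.

Lemma gv_rvec a b c : gv a -> gv b -> gv c -> gv (rvec a b c).
Proof.
move=> ha hb hc i; rewrite /rvec rpredM ?gP_conj //.
  by rewrite /J4; case: ifP => _; rewrite ?rpredN rpred1.
rewrite /cofactor rpredM ?rpredX ?rpredN ?rpred1 //; apply: gP_det => k l.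
rewrite !mxE; case: (nat_of_ord _) => [|[|[|?]]] //=; exact: rpred0.
Qed.

Definition ext4 (b : 'I_3 -> algC) (t : algC) : 'I_4 -> algC := fun i =>
  match nat_of_ord i with 0 => vI b 0 | 1 => vI b 1 | 2 => vI b 2 | _ => t end.
Definition pr3 (z : 'I_4 -> algC) : 'I_3 -> algC := fun i => vI z i.

Lemma ext4_0 b t : vI (ext4 b t) 0 = vI b 0. Proof. by rewrite /vI /ext4 inordK. Qed.
Lemma ext4_1 b t : vI (ext4 b t) 1 = vI b 1. Proof. by rewrite /vI /ext4 inordK. Qed.
Lemma ext4_2 b t : vI (ext4 b t) 2 = vI b 2. Proof. by rewrite /vI /ext4 inordK. Qed.
Lemma ext4_3 b t : vI (ext4 b t) 3 = t. Proof. by rewrite /vI /ext4 inordK. Qed.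
Lemma pr3_0 z : vI (pr3 z) 0 = vI z 0. Proof. by rewrite /vI /pr3 inordK. Qed.
Lemma pr3_1 z : vI (pr3 z) 1 = vI z 1. Proof. by rewrite /vI /pr3 inordK. Qed.
Lemma pr3_2 z : vI (pr3 z) 2 = vI z 2. Proof. by rewrite /vI /pr3 inordK. Qed.

Lemma hJ_ext4 b t z : hJ (ext4 b t) z = hp b (pr3 z) - t^* * vI z 3.
Proof. by rewrite hJE hpE ext4_0 ext4_1 ext4_2 ext4_3 pr3_0 pr3_1 pr3_2. Qed.
Lemma hJ_pr3 z : hJ z z = hp (pr3 z) (pr3 z) - (vI z 3)^* * vI z 3.
Proof. by rewrite hJE hpE pr3_0 pr3_1 pr3_2. Qed.

Lemma gv_ext4 b t : gv b -> t \in gP -> gv (ext4 b t).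
Proof. by move=> hb ht i; rewrite /ext4; case: (nat_of_ord i) => [|[|[|?]]] //; apply: gv_vI. Qed.
Lemma gv_pr3 z : gv z -> gv (pr3 z).
Proof. by move=> hz i; apply: gv_vI. Qed.

Lemma hp_ge0 x : 0 <= hp x x.
Proof. by apply: sumr_ge0 => i _; rewrite -normCKC exprn_ge0. Qed.

Lemma decomp_cross v b k : (k < 3)%N ->
  hp v v * vI b k - hp v b * vI v k = - vI (cross (cjv v) (cross v b)) k.
Proof.
rewrite !hpE; case: k => [|[|[|//]]] _;
  rewrite ?cross0 ?cross1 ?cross2 !vI_cjv ?cross0 ?cross1 ?cross2; ring.
Qed.

Lemma nrm_gt0 z : z != 0 -> 0 < nrm z.
Proof. by move=> z0; rewrite nrmE exprn_gt0 // normr_gt0. Qed.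

Lemma posL v nu a x : nu != 0 -> hp v v = nrm nu -> hp a v = 1 ->
  hJ (ext4 v nu) x = 0 -> hJ (ext4 a 0) x = 0 ->
  0 <= hJ x x /\ (hJ x x = 0 -> forall i, x i = 0).
Proof.
move=> nu0 evv eav hn hy.
set b := pr3 x; set t := vI x 3.
have hvb : hp v b = nu^* * t by move: hn; rewrite hJ_ext4 => /eqP; rewrite subr_eq0 => /eqP.
have hbv : hp b v = nu * t^* by rewrite hpC hvb rmorphM /= conjCK.
have hxx : hJ x x = hp b b - t^* * t by rewrite hJ_pr3.
set u := cjv (cross v b).
have huu : hp u u = nrm nu * hJ x x.
  by rewrite /u lagr3 evv hvb hbv hxx /nrm; ring.
have pos : 0 <= hJ x x.
  by rewrite -(pmulr_rge0 _ (nrm_gt0 nu0)) -huu hp_ge0.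
split => // h0.
have u0 := hp_eq0 (etrans huu (etrans (congr1 _ h0) (mulr0 _))).
have c0 k : vI (cross v b) k = 0.
  by apply/eqP; rewrite -conjC_eq0 -vI_cjv; apply/eqP; exact: u0.
have eb k : (k < 3)%N -> vI b k = (t / nu) * vI v k.
  move=> hk; have := decomp_cross v b hk.
  case: k hk => [|[|[|//]]] _; rewrite ?(cross0 (cjv v)) ?(cross1 (cjv v)) ?(cross2 (cjv v)) !c0 !mulr0 subrr oppr0 evv hvb;
   move/eqP; rewrite subr_eq0 => /eqP e;
   apply: (mulfI (lt0r_neq0 (nrm_gt0 nu0))); rewrite e /nrm; field; exact: nu0.
have hab : hp a b = t / nu * hp a v by rewrite !hpE !eb //; ring.
have ht : t = 0.
  move: hy; rewrite hJ_ext4 rmorph0 mul0r subr0 -/b hab eav mulr1 => /eqP.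
  by rewrite mulf_eq0 invr_eq0 (negbTE nu0) orbF => /eqP.
move=> i; rewrite (vIE x i); case: i => [[|[|[|[|//]]]] hi] /=.
- by rewrite -pr3_0 -/b eb // ht mul0r mul0r.
- by rewrite -pr3_1 -/b eb // ht mul0r mul0r.
- by rewrite -pr3_2 -/b eb // ht mul0r mul0r.
- exact: ht.
Qed.

Lemma hJ_ext4_ext4 b t b' t' : hJ (ext4 b t) (ext4 b' t') = hp b b' - t^* * t'.
Proof. by rewrite hJE hpE !ext4_0 !ext4_1 !ext4_2 !ext4_3. Qed.

Lemma gP_nat_ge0 z : z \in gP -> 0 <= z -> exists k : nat, z = k%:R.
Proof.
move=> /giP[a [b ez]] z0.
have ra : (a%:~R : algC) \is Num.real by apply: Rreal_int; apply: intr_int.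
have rb : (b%:~R : algC) \is Num.real by apply: Rreal_int; apply: intr_int.
have : 'Im z = 0 by apply/Creal_ImP; exact: ger0_real.
rewrite ez Im_rect // => /eqP; rewrite intr_eq0 => /eqP b0.
move: z0; rewrite ez b0 mulr0 addr0 ler0z => a0.
by exists `|a|%N; rewrite natr_absz ger0_norm.
Qed.

Lemma hJ_zero r w : (forall i, r i = 0) -> hJ r w = 0.
Proof. by move=> h; rewrite /hJ big1 // => i _; rewrite h rmorph0 !mul0r mulr0. Qed.

Lemma J4_0 : J4 (inord 0) = 1. Proof. by rewrite /J4 inordK. Qed.
Lemma J4_1 : J4 (inord 1) = 1. Proof. by rewrite /J4 inordK. Qed.
Lemma J4_2 : J4 (inord 2) = 1. Proof. by rewrite /J4 inordK. Qed.
Lemma J4_3 : J4 (inord 3) = -1. Proof. by rewrite /J4 inordK. Qed.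

Lemma step v nu a x (m : nat) : gv v -> nu \in gP -> gv a -> nu != 0 ->
  hp v v = nrm nu -> hp a v = 1 ->
  gv x -> hJ (ext4 v nu) x = 0 -> hJ (ext4 a 0) x = 0 -> hJ x x = m%:R -> (2 <= m)%N ->
  (exists2 c, gv c & \sum_i x i * c i = 1) ->
  exists s (m' : nat), [/\ gv s, hJ (ext4 v nu) s = 0, hJ (ext4 a 0) s = 0,
     hJ s s = m'%:R & (0 < m' < m)%N].
Proof.
move=> gvv gnu gva nu0 evv eav gx hnx hyx hxx m2 [c gc ec].
set n := ext4 v nu; set y := ext4 a 0.
have gn : gv n by apply: gv_ext4.
have gy : gv y by apply: gv_ext4; rewrite ?rpred0.
have hnn : hJ n n = 0 by rewrite /n hJ_ext4_ext4 evv /nrm mulrC subrr.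
have hyn : hJ y n = 1 by rewrite /y /n hJ_ext4_ext4 eav rmorph0 mul0r subr0.
have hny : hJ n y = 1 by rewrite hJC hyn rmorph1.
set e := hJ y y.
have hxn : hJ x n = 0 by rewrite hJC hnx rmorph0.
have hxy : hJ x y = 0 by rewrite hJC hyx rmorph0.
pose z := fun i => J4 i * (c i)^*.
have gz : gv z.
  by move=> i; rewrite /z rpredM ?gP_conj // /J4; case: ifP => _; rewrite ?rpredN rpred1.
have hxz : hJ x z = 1.
  rewrite -(rmorph1 Num.conj_op) -ec sum4 hJE /vI /z J4_0 J4_1 J4_2 J4_3 !rmorphD !rmorphM /=; ring.
pose q := vsub (vsub z (hJ y z - e * hJ n z) n) (hJ n z) y.
have gq : gv q by apply: gv_vsub; rewrite ?gv_hJ //; apply: gv_vsub; rewrite ?rpredB ?rpredM ?gv_hJ.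
have hnq : hJ n q = 0 by rewrite !hJ_vsubr hnn hny; ring.
have hyq : hJ y q = 0 by rewrite !hJ_vsubr hyn -/e; ring.
have hxq : hJ x q = 1 by rewrite !hJ_vsubr hxz hxn hxy; ring.
set r := rvec n y x.
have gr : gv r by apply: gv_rvec.
have PS w : hJ n w = 0 -> hJ y w = 0 -> nrm (hJ r w) = m%:R * hJ w w - hJ x w * hJ w x.
  move=> h1 h2; rewrite hJ_rvec; apply: parseval => //.
  - by rewrite hJC h1 rmorph0.
  - by rewrite hJC h2 rmorph0.
have hnr : hJ n r = 0 by rewrite hJC hJ_rvec det_mat4_rep0 rmorph0.
have hyr : hJ y r = 0 by rewrite hJC hJ_rvec det_mat4_rep1 rmorph0.
have hxr : hJ x r = 0 by rewrite hJC hJ_rvec det_mat4_rep2 rmorph0.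
have [rpos rzero] := posL nu0 evv eav hnr hyr.
have natL w : gv w -> hJ n w = 0 -> hJ y w = 0 -> exists k : nat, hJ w w = k%:R.
  move=> gw h1 h2; apply: gP_nat_ge0; first exact: gv_hJ.
  by case: (posL nu0 evv eav h1 h2).
set rho := hJ r r.
have erho : rho * rho = m%:R * rho.
  have := PS r hnr hyr; rewrite -/rho hxr mul0r subr0 /nrm.
  by rewrite /rho hJ_real.
have m0 : (m%:R : algC) != 0 by rewrite pnatr_eq0; move: m2; lia.
case: (rho =P 0) => [rho0|/eqP rho0].
  exfalso; have r0 := rzero rho0.
  have := PS q hnq hyq; rewrite (hJ_zero _ r0) (hJC x q) hxq rmorph1 mulr1 /nrm mul0r.
  have [k ek] := natL q gq hnq hyq.
  rewrite ek -natrM => /esym/eqP; rewrite subr_eq0 -[X in _ == X]/(1%:R : algC) eqr_nat => /eqP mk1.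
  by move/eqP: mk1 m2; rewrite muln_eq1 => /andP[/eqP -> _].
have rhom : rho = m%:R by apply: (mulIf rho0); rewrite erho.
have [t [rem [gt grem eq le]]] := gdiv (gv_hJ gr gq) (gP_nat m) m0.
pose s := vsub q t r.
have gs : gv s by apply: gv_vsub.
have hns : hJ n s = 0 by rewrite hJ_vsubr hnq hnr mulr0 subr0.
have hys : hJ y s = 0 by rewrite hJ_vsubr hyq hyr mulr0 subr0.
have hxs : hJ x s = 1 by rewrite hJ_vsubr hxq hxr mulr0 subr0.
have hrs : hJ r s = rem by rewrite hJ_vsubr -/rho rhom eq; ring.
have [S eS] := natL s gs hns hys.
have PSs := PS s hns hys.
move: PSs; rewrite hrs (hJC x s) hxs rmorph1 mulr1 eS -(nNE grem) -natrM.
move=> /(congr1 (fun u => u + 1)); rewrite subrK natr1 => /eqP; rewrite eqr_nat => /eqP PSs.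
have nm : nN (m%:R) = (m * m)%N.
  by apply/eqP; rewrite -(eqr_nat algC) nNE ?gP_nat // /nrm conjC_nat natrM.
rewrite nm in le.
exists s, S; split => //.
apply/andP; split.
  rewrite lt0n; apply/eqP => S0; move: hxs.
  have s0 := proj2 (posL nu0 evv eav hns hys) (etrans eS (congr1 _ S0)).
  by rewrite hJC (hJ_zero _ s0) rmorph0 => /eqP; rewrite eq_sym oner_eq0.
nia.
Qed.

Lemma hJ_ext x1 x2 z1 z2 : (forall i, x1 i = x2 i) -> (forall i, z1 i = z2 i) -> hJ x1 z1 = hJ x2 z2.
Proof. by move=> h1 h2; apply: eq_bigr => i _; rewrite h1 h2. Qed.

Lemma descent v nu a : gv v -> nu \in gP -> gv a -> nu != 0 ->
  hp v v = nrm nu -> hp a v = 1 ->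
  forall m x, gv x -> hJ (ext4 v nu) x = 0 -> hJ (ext4 a 0) x = 0 -> hJ x x = m%:R -> (0 < m)%N ->
  exists f, [/\ gv f, hJ (ext4 v nu) f = 0, hJ (ext4 a 0) f = 0 & hJ f f = 1].
Proof.
move=> gvv gnu gva nu0 evv eav m; elim/ltn_ind: m => m IH x gx hnx hyx hxx m0.
have [g [c [hg gc eg dg]]] := bezoutF gx.
have g0 : g != 0.
  apply/eqP => g0; move: m0; rewrite lt0n => /eqP; apply.
  apply/eqP; rewrite -(eqr_nat algC) -hxx hJ_zero // => i.
  by case: (dg i) => k _ ->; rewrite g0 mul0r.
pose x' := scv g^-1 x.
have gx' : gv x'.
  by move=> i; rewrite /x' /scv; case: (dg i) => k hk ->; rewrite mulKf.
have exx : forall i, x i = g * x' i by move=> i; rewrite /x' /scv mulVKf.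
have hnx' : hJ (ext4 v nu) x' = 0 by rewrite hJ_sclr hnx mulr0.
have hyx' : hJ (ext4 a 0) x' = 0 by rewrite hJ_sclr hyx mulr0.
clearbody x'.
have [m' em'] : exists m' : nat, hJ x' x' = m'%:R.
  apply: gP_nat_ge0; first exact: gv_hJ.
  by case: (posL nu0 evv eav hnx' hyx').
have emm : m = (nN g * m')%N.
  apply/eqP; rewrite -(eqr_nat algC) natrM nNE // -hxx -em'; apply/eqP.
  rewrite (hJ_ext (x2 := scv g x') (z2 := scv g x') exx exx) hJ_scll hJ_sclr /nrm; ring.
have ec' : \sum_i x' i * c i = 1.
  apply: (mulfI g0); rewrite mulr1 mulr_sumr {2}eg; apply: eq_bigr => i _.
  by rewrite exx mulrA.
have m'0 : (0 < m')%N by move: m0; rewrite emm muln_gt0 => /andP[].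
have gn1 : (0 < nN g)%N by move: m0; rewrite emm muln_gt0 => /andP[].
case: (ltnP 1 m') => m'2; last first.
  have m1 : m' = 1%N by move: m'0 m'2; lia.
  by exists x'; split => //; rewrite em' m1.
have [s [m'' [gs hns hys ess /andP[m''0 m''m]]]] :=
  step gvv gnu gva nu0 evv eav gx' hnx' hyx' em' m'2 (ex_intro2 _ _ c gc ec').
apply: (IH m'' _ s) => //.
rewrite emm; apply: (leq_trans m''m); rewrite leq_pmull //.
Qed.

Lemma hp_vsubr x u c w : hp x (vsub u c w) = hp x u - c * hp x w.
Proof. by rewrite !hpE !vI_vsub; ring. Qed.
Lemma hp_vsubl x u c w : hp (vsub u c w) x = hp u x - c^* * hp w x.
Proof. by rewrite !hpE !vI_vsub !rmorphB !rmorphM; ring. Qed.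

Lemma perp_exists v : gv v -> exists u, [/\ gv u, hp v u = 0 & hp u u != 0].
Proof.
move=> gvv; case h: ((vI v 1 == 0) && (vI v 2 == 0)).
  move/andP: h => [/eqP h1 /eqP h2].
  exists (fun i : 'I_3 => if nat_of_ord i == 1%N then 1 else 0); split.
  - by move=> i; case: ifP => _; rewrite ?rpred1 ?rpred0.
  - by rewrite hpE /vI !inordK //= -/(vI v 1) h1 rmorph0; ring.
  - by rewrite hpE /vI !inordK //= rmorph0 rmorph1; rewrite !mul0r mul1r add0r addr0 oner_eq0.
exists (fun i : 'I_3 => match nat_of_ord i with 0 => 0 | 1 => (vI v 2)^* | _ => - (vI v 1)^* end).
split.
- by move=> i; case: (nat_of_ord i) => [|[|?]]; rewrite ?rpred0 ?rpredN //; apply: gP_conj; apply: gv_vI.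
- by rewrite hpE /vI !inordK //=; ring.
- rewrite hpE /vI !inordK //= -!/(vI v _) rmorph0 mul0r add0r rmorphN /= !conjCK.
  rewrite mulrNN.
  have p1 : 0 <= vI v 2 * (vI v 2)^* by rewrite -normCK exprn_ge0.
  have p2 : 0 <= vI v 1 * (vI v 1)^* by rewrite -normCK exprn_ge0.
  rewrite paddr_eq0 // !mulf_eq0 !conjC_eq0 !orbb.
  by rewrite andbC h.
Qed.

Lemma ext1prim v nu c : gv v -> nu \in gP -> nu != 0 -> hp v v = nrm nu -> gv c ->
  \sum_i v i * c i = 1 -> exists w, [/\ gv w, hp w w = nrm nu & hp v w = 0].
Proof.
move=> gvv gnu nu0 evv gc ec.
pose a := cjv c.
have gva : gv a by apply: gv_cjv.
have eav : hp a v = 1.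
  by rewrite -ec /hp; apply: eq_bigr => i _; rewrite /a /cjv conjCK mulrC.
set n := ext4 v nu; set y := ext4 a 0.
have hnn : hJ n n = 0 by rewrite /n hJ_ext4_ext4 evv /nrm mulrC subrr.
have hyn : hJ y n = 1 by rewrite /y /n hJ_ext4_ext4 eav rmorph0 mul0r subr0.
have [u [gu hvu huu]] := perp_exists gvv.
pose x0 := ext4 u 0.
pose ka := hJ y x0.
pose x := vsub x0 ka n.
have gx0 : gv x0 by apply: gv_ext4; rewrite ?rpred0.
have gn : gv n by apply: gv_ext4.
have gy : gv y by apply: gv_ext4; rewrite ?rpred0.
have gx : gv x by apply: gv_vsub => //; apply: gv_hJ.
have hnx : hJ n x = 0 by rewrite hJ_vsubr hnn mulr0 subr0 /x0 /n hJ_ext4_ext4 hvu mulr0 subr0.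
have hyx : hJ y x = 0 by rewrite hJ_vsubr hyn mulr1 subrr.
have [p0 pz] := posL nu0 evv eav hnx hyx.
have [m em] := gP_nat_ge0 (gv_hJ gx gx) p0.
have m0 : (0 < m)%N.
  rewrite lt0n; apply/eqP => m0; move: em; rewrite m0 => /pz x00.
  have : vI x 3 = 0 by apply: x00.
  rewrite vI_vsub /x0 /n !ext4_3 sub0r => /eqP; rewrite oppr_eq0 mulf_eq0 (negbTE nu0) orbF => /eqP k0.
  have uk k : (k < 3)%N -> vI u k = 0.
    move=> hk; have : vI x k = 0 by apply: x00.
    rewrite vI_vsub k0 mul0r subr0 /x0.
    by case: k hk => [|[|[|//]]] _; rewrite ?ext4_0 ?ext4_1 ?ext4_2.
  by move/eqP: huu; apply; rewrite hpE !uk // !mulr0 !addr0.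
have [f [gf hnf hyf hff]] := descent gvv gnu gva nu0 evv eav gx hnx hyx em m0.
pose b := pr3 f; pose t := vI f 3.
have hvb : hp v b = nu^* * t by move: hnf; rewrite hJ_ext4 => /eqP; rewrite subr_eq0 => /eqP.
have hbv : hp b v = nu * t^* by rewrite hpC hvb rmorphM /= conjCK.
exists (vsub (scv nu b) t v); split.
- apply: gv_vsub => //; [apply: gv_scv => //; exact: gv_pr3 | exact: gv_vI].
- rewrite hp_vsubl !hp_vsubr !hp_scll !hp_sclr hvb hbv evv.
  have H : hp b b = 1 + t^* * t by rewrite -hff hJ_pr3 subrK.
  rewrite H /nrm; ring.
- by rewrite hp_vsubr hp_sclr hvb evv /nrm; ring.
Qed.



Lemma hp_ext x1 x2 z1 z2 : (forall i, x1 i = x2 i) -> (forall i, z1 i = z2 i) -> hp x1 z1 = hp x2 z2.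
Proof. by move=> h1 h2; apply: eq_bigr => i _; rewrite h1 h2. Qed.

Lemma ext1 lam mu v : mu \in gP -> nrm mu = lam -> lam != 0 -> gv v -> hp v v = lam ->
  exists w, [/\ gv w, hp w w = lam & hp v w = 0].
Proof.
move=> gmu emu l0 gvv evv.
have [g [c [hg gc eg dg]]] := bezoutF gvv.
have g0 : g != 0.
  apply/eqP => g0; move/eqP: l0; apply; rewrite -evv /hp big1 // => i _.
  by case: (dg i) => k _ ->; rewrite g0 mul0r mulr0.
pose v' := scv g^-1 v.
have gv' : gv v' by move=> i; rewrite /v' /scv; case: (dg i) => k hk ->; rewrite mulKf.
have evx : forall i, v i = g * v' i by move=> i; rewrite /v' /scv mulVKf.
clearbody v'.
have ec : \sum_i v' i * c i = 1.
  apply: (mulfI g0); rewrite mulr1 mulr_sumr {2}eg; apply: eq_bigr => i _.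
  by rewrite evx mulrA.
set D := hp v' v'.
have gD : D \in gP by apply: gv_hp.
have elam : lam = nrm g * D.
  rewrite -evv (hp_ext (x2 := scv g v') (z2 := scv g v') evx evx) hp_scll hp_sclr /nrm /D; ring.
have dv : gdvd (nrm g) (nrm mu) by exists D => //; rewrite emu.
have [de gde [[nu gnu enu] ede]] := normdiv hg gmu g0 dv.
have ng0 : nrm g != 0 by rewrite nrm_eq0.
have eD : D = nrm nu.
  apply: (mulfI ng0); rewrite -elam -emu enu nrmM ede //.
have nu0 : nu != 0.
  apply: contraNneq l0 => n0; rewrite elam eD n0 /nrm mul0r mulr0 //.
have [w' [gw' ew' vw']] := ext1prim gv' gnu nu0 eD gc ec.
exists (scv g w'); split.
- by apply: gv_scv.
- by rewrite hp_scll hp_sclr ew' elam eD /nrm; ring.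
- rewrite (hp_ext (x2 := scv g v') (z2 := scv g w') evx (fun _ => erefl)) hp_scll hp_sclr vw'.
  by rewrite !mulr0.
Qed.

Definition colv k (A : 'M[algC]_(3, k)) (j : 'I_k) : 'I_3 -> algC := fun l => A l j.

Lemma adjE k (A : 'M[algC]_(3, k)) i j : (adjmx A *m A) i j = hp (colv A i) (colv A j).
Proof. by rewrite /adjmx !mxE; apply: eq_bigr => l _; rewrite !mxE. Qed.

Definition sel3 (c0 c1 c2 : 'I_3 -> algC) (k : nat) :=
  match k with 0 => c0 | 1 => c1 | _ => c2 end.
Definition mk3 (c0 c1 c2 : 'I_3 -> algC) : 'M[algC]_3 :=
  \matrix_(i, j) sel3 c0 c1 c2 (nat_of_ord j) i.

Lemma icube_mk3 L c0 c1 c2 : gv c0 -> gv c1 -> gv c2 ->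
  hp c0 c0 = L -> hp c1 c1 = L -> hp c2 c2 = L ->
  hp c0 c1 = 0 -> hp c0 c2 = 0 -> hp c1 c2 = 0 -> icube L (mk3 c0 c1 c2).
Proof.
move=> g0 g1 g2 e00 e11 e22 e01 e02 e12; split.
  by move=> i j; rewrite mxE; case: (nat_of_ord j) => [|[|?]] /=; rewrite -gPE.
apply/matrixP => i j; rewrite adjE mxE.
have -> : hp (colv (mk3 c0 c1 c2) i) (colv (mk3 c0 c1 c2) j) =
    hp (sel3 c0 c1 c2 i) (sel3 c0 c1 c2 j) by apply: hp_ext => l; rewrite /colv mxE.
have e10 : hp c1 c0 = 0 by rewrite hpC e01 rmorph0.
have e20 : hp c2 c0 = 0 by rewrite hpC e02 rmorph0.
have e21 : hp c2 c1 = 0 by rewrite hpC e12 rmorph0.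
by case: i => [[|[|[|//]]] hi]; case: j => [[|[|[|//]]] hj] /=.
Qed.

Unset Implicit Arguments.

Theorem mainTheorem4 (lam : nat) (hlam : (0 < lam)%N)
  (hsq : exists a b : int, lam%:Z = a ^+ 2 + b ^+ 2)
  (k : nat) (hk1 : (1 <= k)%N) (hk3 : (k <= 3)%N)
  (A : 'M[algC]_(3, k)) (hA : icube lam%:R A) :
  icube_extends 3 lam%:R A.
Proof.
case: hsq => a [b eab].
set L : algC := lam%:R.
pose mu : algC := a%:~R + 'i * b%:~R.
have gmu : mu \in gP by apply/giP; exists a, b.
have emu : nrm mu = L.
  by rewrite /mu nrm_rect -!expr2 -eab /L natz_alg.
have L0 : L != 0 by rewrite /L pnatr_eq0 -lt0n.
case: hA => gA eA.
have hpA i j : hp (colv A i) (colv A j) = L *+ (i == j) by rewrite -adjE eA mxE.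
have gc j : gv (colv A j) by move=> l; rewrite gPE; apply: gA.
move: hk1 hk3 A gA eA hpA gc; case: k => [|[|[|[|k]]]] // _ _ A gA eA hpA gc.
-
  set v := colv A ord0.
  have evv : hp v v = L by rewrite hpA eqxx.
  have [w [gw eww evw]] := ext1 gmu emu L0 (gc ord0) evv.
  have ewv : hp w v = 0 by rewrite hpC evw rmorph0.
  have [v3 [g3 e33 e13 e23]] := ext2 gmu emu L0 (gc ord0) gw evv eww evw.
  exists (mk3 v w v3), (fun _ => ord0); split.
  + exact: (icube_mk3 (gc ord0) gw g3 evv eww e33 evw e13 e23).
  + split; first by move=> x y _; rewrite !ord1.
    by apply/matrixP => i j; rewrite !mxE ord1.
-
  set v1 := colv A ord0; set v2 := colv A ord_max.
  have e11 : hp v1 v1 = L by rewrite hpA eqxx.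
  have e22 : hp v2 v2 = L by rewrite hpA eqxx.
  have e12 : hp v1 v2 = 0 by rewrite hpA.
  have [v3 [g3 e33 e13 e23]] := ext2 gmu emu L0 (gc ord0) (gc ord_max) e11 e22 e12.
  exists (mk3 v1 v2 v3), (widen_ord (leqnSn 2)); split.
  + exact: (icube_mk3 (gc ord0) (gc ord_max) g3 e11 e22 e33 e12 e13 e23).
  + split; first by move=> x y /(congr1 val) /= e; apply: val_inj.
    apply/matrixP => i j; rewrite !mxE.
    by case: j => [[|[|//]] hj] /=; rewrite /v1 /v2 /colv; congr (A _ _); apply: val_inj.
-
  exists A, id; split => //; split => //.
  by apply/matrixP => i j; rewrite !mxE.
Qed.
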